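(* For every $m>0$ there exist $C(m)\ge0$ and $\tau_0\ge0$ such that for all $\tau\ge\tau_0$, $$\big|\tau^{-2}e^{\tau m/2}F_1(m,\tau)-1\big|\le C(m)\,\tau\, e^{-\tau m/2}.$$ In particular $\tau^{-2}e^{\tau m/2}F_1(m,\tau)\to1$ as $\tau\to+\infty$.
   Context: $F_1(m,\tau)=\lambda_1\big((-m/2,m/2),\tau e_r\big)$, the principal Dirichlet eigenvalue on the interval $(-m/2,m/2)$ of the operator $u\mapsto -u''+\tau\,\mathrm{sgn}(x)\,u'$ (here $e_r(x)=x/|x|=\mathrm{sgn}(x)$). *)

(* Defs.v *)
From Stdlib Require Import Reals.
From Coquelicot Require Import Coquelicot.
Open Scope R_scope.

Definition sgn (x : R) : R :=
  if Rlt_dec 0 x then 1 else if Rlt_dec x 0 then -1 else 0.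

(* lam is the principal Dirichlet eigenvalue on (-m/2, m/2) of
   u |-> -u'' + tau * sgn(x) * u' : there is a positive eigenfunction u
   (strong solution: C^1 on the open interval, twice differentiable off the
   discontinuity point 0 of the drift), vanishing at both endpoints. *)
Definition principal_eigenvalue (m tau lam : R) : Prop :=
  exists u u' : R -> R,
    (forall x, -(m/2) < x < m/2 -> is_derive u x (u' x) /\ continuous u' x) /\
    (forall x, -(m/2) < x < m/2 -> x <> 0 ->
        exists d2, is_derive u' x d2 /\ - d2 + tau * sgn x * u' x = lam * u x) /\
    (forall x, -(m/2) < x < m/2 -> 0 < u x) /\
    filterlim u (at_right (-(m/2))) (locally 0) /\
    filterlim u (at_left (m/2)) (locally 0).

(* Main.v *)
Require Import Defs.
From Stdlib Require Import Reals Lra Psatz.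
From Coquelicot Require Import Coquelicot.
Open Scope R_scope.

Lemma drv_mult (f g : R -> R) x df dg : is_derive f x df -> is_derive g x dg ->
  is_derive (fun t => f t * g t) x (df * g x + f x * dg).
Proof. intros Hf Hg. exact (is_derive_mult f g x df dg Hf Hg (fun a b => Rmult_comm a b)). Qed.

Lemma drv_exp c x : is_derive (fun t => exp (c * t)) x (c * exp (c * x)).
Proof. auto_derive; auto. ring. Qed.

Lemma cont_eps f c : continuity_pt f c -> forall eps, 0 < eps ->
  exists d, 0 < d /\ forall y, Rabs (y - c) < d -> Rabs (f y - f c) < eps.
Proof.
  intros Hc eps He.
  unfold continuity_pt, continue_in, limit1_in, limit_in in Hc; simpl in Hc.
  destruct (Hc eps He) as [d [Hd Hd']]. exists d; split; auto.
  intros y Hy. destruct (Req_dec y c) as [->|Hne].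
  - unfold Rminus; rewrite Rplus_opp_r, Rabs_R0; auto.
  - apply (Hd' y). split; [split; [exact I| auto] | exact Hy].
Qed.

Lemma cont_right_ge0 f c r : continuity_pt f c -> 0 < r ->
  (forall x, c < x < c + r -> 0 <= f x) -> 0 <= f c.
Proof.
  intros Hc Hr H. destruct (Rle_or_lt 0 (f c)) as [|Hn]; auto. exfalso.
  destruct (cont_eps f c Hc (- f c / 2)) as [d [Hd Hd']]; [lra|].
  assert (0 < Rmin d r) by (apply Rmin_glb_lt; lra).
  assert (Rmin d r <= d) by apply Rmin_l. assert (Rmin d r <= r) by apply Rmin_r.
  specialize (Hd' (c + Rmin d r / 2)). specialize (H (c + Rmin d r / 2)).
  assert (Rabs (c + Rmin d r / 2 - c) < d) by (rewrite Rabs_right; lra).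
  specialize (Hd' H3). specialize (H ltac:(lra)).
  apply Rabs_lt_between in Hd'. lra.
Qed.

Lemma cont_left_ge0 f c r : continuity_pt f c -> 0 < r ->
  (forall x, c - r < x < c -> 0 <= f x) -> 0 <= f c.
Proof.
  intros Hc Hr H. destruct (Rle_or_lt 0 (f c)) as [|Hn]; auto. exfalso.
  destruct (cont_eps f c Hc (- f c / 2)) as [d [Hd Hd']]; [lra|].
  assert (0 < Rmin d r) by (apply Rmin_glb_lt; lra).
  assert (Rmin d r <= d) by apply Rmin_l. assert (Rmin d r <= r) by apply Rmin_r.
  specialize (Hd' (c - Rmin d r / 2)). specialize (H (c - Rmin d r / 2)).
  assert (Rabs (c - Rmin d r / 2 - c) < d) by (rewrite Rabs_left; lra).
  specialize (Hd' H3). specialize (H ltac:(lra)).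
  apply Rabs_lt_between in Hd'. lra.
Qed.

Lemma derive_cont f x df : is_derive f x df -> continuity_pt f x.
Proof. intros H. apply is_derive_Reals in H. apply derivable_continuous_pt. exists df; exact H. Qed.

Lemma L_decr f df x y : x <= y ->
  (forall z, x <= z <= y -> is_derive f z (df z) /\ df z <= 0) -> f y <= f x.
Proof.
  intros Hxy H. destruct (Req_dec x y) as [->|Hne]; [lra|].
  destruct (MVT_gen f x y df) as [c [Hc Heq]].
  - intros z Hz. rewrite Rmin_left in Hz by lra. rewrite Rmax_right in Hz by lra.
    apply H; lra.
  - intros z Hz. rewrite Rmin_left in Hz by lra. rewrite Rmax_right in Hz by lra.
    apply (derive_cont f z (df z)). apply H; lra.
  - rewrite Rmin_left in Hc by lra. rewrite Rmax_right in Hc by lra.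
    destruct (H c Hc) as [_ Hn].
    assert (df c * (y - x) <= 0). { apply Rmult_le_0_r; lra. }
    lra.
Qed.

Lemma L_const f x y : x <= y ->
  (forall z, x <= z <= y -> is_derive f z 0) -> f y = f x.
Proof.
  intros Hxy H. apply Rle_antisym.
  - apply (L_decr f (fun _ => 0)); auto. intros z Hz; split; [apply H; auto | lra].
  - assert (- f y <= - f x); [|lra].
    apply (L_decr (fun t => - f t) (fun _ => 0)); auto. intros z Hz; split; [|lra].
    replace 0 with (- 0) by ring. apply (is_derive_opp f z 0). apply H; auto.
Qed.

Lemma exp_ge1x x : 1 + x <= exp x.
Proof. destruct (Req_dec x 0) as [->|H]; [rewrite exp_0; lra| left; apply exp_ineq1; auto]. Qed.

Lemma exp_mono x y : x <= y -> exp x <= exp y.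
Proof. intros [H|H]; [left; apply exp_increasing; auto | subst; lra]. Qed.

Lemma final_ab a b E F : 36 <= b -> 0 < a -> E = exp a -> F = exp (-a) ->
  b * (E - F) = a * (E + F) ->
  Rabs (exp (2 * b) / (E + F) ^ 2 - 1) <= (108 * b + 18) * exp (- (2 * b)).
Proof.
  intros Hb Ha HE HF Hrel.
  assert (HEF : E * F = 1) by (subst; rewrite <- exp_plus, Rplus_opp_r; apply exp_0).
  assert (HEp : 0 < E) by (subst; apply exp_pos).
  assert (HFp : 0 < F) by (subst; apply exp_pos).
  set (G := E * E).
  assert (HG : G = exp (2 * a)) by (unfold G; subst; rewrite <- exp_plus; f_equal; ring).
  assert (HG2 : 1 + 2 * a <= G) by (rewrite HG; apply exp_ge1x).
  assert (Hrel2 : b * (G - 1) = a * (G + 1)).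
  { unfold G. transitivity (E * (b * (E - F)) + b * (E * F - 1)); [ring|].
    rewrite Hrel, HEF. ring_simplify. nra. }
  assert (Ha1 : b <= 1 + a) by nra.
  assert (Hab : a <= b) by nra.
  assert (Hba : (b - a) * G = b + a) by nra.
  set (Z := exp (- (2 * b))).
  assert (HZp : 0 < Z) by apply exp_pos.
  assert (He2 : exp 2 <= 9).
  { replace 2 with (1 + 1) by ring. rewrite exp_plus. pose proof exp_le_3. pose proof (exp_pos 1). nra. }
  assert (HFF : F * F = exp (- (2 * a))) by (subst; rewrite <- exp_plus; f_equal; ring).
  assert (HFZ : F * F <= 9 * Z).
  { rewrite HFF. apply Rle_trans with (exp 2 * Z); [|pose proof exp_pos 2; nra].
    unfold Z; rewrite <- exp_plus; apply exp_mono; lra. }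
  assert (HGF : G * (F * F) = 1) by (unfold G; nra).
  assert (Hbma : b - a <= 18 * b * Z).
  { assert (b - a = (b + a) * (F * F)) by (rewrite <- Hba; nra). nra. }
  assert (Hexp2b : 36 * b <= exp (2 * b)).
  { replace (2 * b) with (b + b) by ring. rewrite exp_plus. pose proof (exp_ge1x b). nra. }
  assert (HZ2 : exp (2 * b) * Z = 1) by (unfold Z; rewrite <- exp_plus, Rplus_opp_r; apply exp_0).
  assert (HbZ : 36 * b * Z <= 1) by nra.
  set (y := 2 * (b - a)).
  assert (Hy0 : 0 <= y) by (unfold y; lra).
  assert (Hy1 : y <= 1) by (unfold y; nra).
  assert (Hey : exp (2 * b) = exp y * G) by (rewrite HG; unfold y; rewrite <- exp_plus; f_equal; ring).
  assert (Heyup : exp y <= 1 + 3 * y).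
  { pose proof (exp_ge1x (- y)). assert (exp y * exp (- y) = 1) by (rewrite <- exp_plus, Rplus_opp_r; apply exp_0).
    assert (exp y <= 3) by (apply Rle_trans with (exp 1); [apply exp_mono; lra| apply exp_le_3]).
    pose proof (exp_pos y). nra. }
  assert (Heylo : 1 <= exp y) by (pose proof (exp_ge1x y); lra).
  set (t := F * F). fold t in HFZ, HGF, HFF.
  assert (HEFs : (E + F) ^ 2 = G * (1 + t) ^ 2).
  { unfold t, G. transitivity (E * E + 2 * (E * F) + F * F); [ring|]. rewrite HEF.
    transitivity (E * E + 2 * (E * F) * (E * F) + (E * F) * (E * F) * (F * F)); [|ring].
    rewrite HEF; ring. }
  assert (Htp : 0 < t) by (unfold t; nra).
  assert (HGp : 0 < G) by lra.
  assert (HQ : exp (2 * b) / (E + F) ^ 2 = exp y / (1 + t) ^ 2).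
  { rewrite HEFs, Hey. field. split; nra. }
  rewrite HQ.
  assert (Hpos : 0 < (1 + t) ^ 2) by nra.
  assert (Hup : exp y / (1 + t) ^ 2 <= exp y).
  { apply Rmult_le_reg_r with ((1 + t) ^ 2); auto. unfold Rdiv. rewrite Rmult_assoc, Rinv_l by lra.
    pose proof (exp_pos y). nra. }
  assert (Hlo : 1 - 2 * t <= exp y / (1 + t) ^ 2).
  { apply Rmult_le_reg_r with ((1 + t) ^ 2); auto. unfold Rdiv. rewrite Rmult_assoc, Rinv_l by lra.
    nra. }
  assert (0 <= b * Z) by nra.
  replace ((108 * b + 18) * Z) with (108 * (b * Z) + 18 * Z) by ring.
  apply Rabs_le. split.
  - lra.
  - assert (y = 2 * (b - a)) by reflexivity. assert (b - a <= 18 * (b * Z)) by (rewrite <- Rmult_assoc; lra). lra.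
Qed.

Lemma drv_neg (g : R -> R) x d : is_derive g (-x) d -> is_derive (fun t => g (- t)) x (- d).
Proof. intros H. replace (-d) with (-1*d) by ring.
 apply (is_derive_comp g (fun t => -t) x d (-1) H). auto_derive; [exact I| ring]. Qed.

Lemma loc_gt x c : c < x -> locally x (fun t => c < t).
Proof. intros H. exists (mkposreal (x - c) ltac:(lra)). intros t Ht.
  assert (Rabs (t - x) < x - c) by exact Ht. apply Rabs_lt_between' in H0. lra. Qed.
Lemma loc_lt x c : x < c -> locally x (fun t => t < c).
Proof. intros H. exists (mkposreal (c - x) ltac:(lra)). intros t Ht.
  assert (Rabs (t - x) < c - x) by exact Ht. apply Rabs_lt_between' in H0. lra. Qed.

Lemma ex_cont f x : ex_derive f x -> continuity_pt f x.
Proof. intros [df H]. exact (derive_cont f x df H). Qed.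

Lemma cont_conv f x : continuity_pt f x -> continuous f x.
Proof. intros H. apply continuity_pt_filterlim in H. exact H. Qed.
Lemma cont_conv' f x : continuous f x -> continuity_pt f x.
Proof. intros H. apply continuity_pt_filterlim. exact H. Qed.

Lemma glue_der (f g h : R -> R) (L : R) : (forall x, 0 <= x -> f x = g x) -> (forall x, x <= 0 -> f x = h x) ->
  is_derive g 0 L -> is_derive h 0 L -> is_derive f 0 L.
Proof.
  intros Hg Hh Dg Dh. apply is_derive_Reals. apply is_derive_Reals in Dg, Dh.
  intros eps He. destruct (Dg eps He) as [d1 H1]. destruct (Dh eps He) as [d2 H2].
  assert (Hp : 0 < Rmin d1 d2) by (apply Rmin_glb_lt; apply cond_pos).
  exists (mkposreal _ Hp). intros k Hk Hkd. simpl in Hkd.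
  assert (Rmin d1 d2 <= d1) by apply Rmin_l. assert (Rmin d1 d2 <= d2) by apply Rmin_r.
  destruct (Rle_dec 0 k).
  - rewrite (Hg (0 + k)) by lra. rewrite (Hg 0) by lra. apply H1; auto; lra.
  - rewrite (Hh (0 + k)) by lra. rewrite (Hh 0) by lra. apply H2; auto; lra.
Qed.

Lemma glue_cont (f g h : R -> R) : (forall x, 0 <= x -> f x = g x) -> (forall x, x <= 0 -> f x = h x) ->
  continuity_pt g 0 -> continuity_pt h 0 -> continuity_pt f 0.
Proof.
  intros Hg Hh Cg Ch. unfold continuity_pt, continue_in, limit1_in, limit_in; simpl.
  intros eps He. destruct (cont_eps g 0 Cg eps He) as [d1 [Hd1 H1]].
  destruct (cont_eps h 0 Ch eps He) as [d2 [Hd2 H2]].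
  exists (Rmin d1 d2). split; [apply Rmin_glb_lt; auto|].
  intros x [_ Hx]. unfold R_dist in *.
  assert (Rmin d1 d2 <= d1) by apply Rmin_l. assert (Rmin d1 d2 <= d2) by apply Rmin_r.
  destruct (Rle_dec 0 x).
  - rewrite (Hg x) by lra. rewrite (Hg 0) by lra. apply H1; lra.
  - rewrite (Hh x) by lra. rewrite (Hh 0) by lra. apply H2; lra.
Qed.

Definition Gf E F r1 r2 y := E * exp (r1 * y) - F * exp (r2 * y).
Definition Gd E F r1 r2 y := E * r1 * exp (r1 * y) - F * r2 * exp (r2 * y).
Definition Gdd E F r1 r2 y := E * r1 ^ 2 * exp (r1 * y) - F * r2 ^ 2 * exp (r2 * y).

Lemma dGf E F r1 r2 y : is_derive (Gf E F r1 r2) y (Gd E F r1 r2 y).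
Proof. unfold Gf, Gd. auto_derive; auto. ring. Qed.
Lemma dGd E F r1 r2 y : is_derive (Gd E F r1 r2) y (Gdd E F r1 r2 y).
Proof. unfold Gd, Gdd. auto_derive; auto. ring. Qed.
Lemma dGdneg E F r1 r2 y : is_derive (fun t => - Gd E F r1 r2 (- t)) y (Gdd E F r1 r2 (- y)).
Proof. unfold Gd, Gdd. auto_derive; auto. ring. Qed.
Lemma cGf E F r1 r2 y : continuity_pt (Gf E F r1 r2) y.
Proof. apply ex_cont. unfold Gf. auto_derive. auto. Qed.
Lemma cGd E F r1 r2 y : continuity_pt (Gd E F r1 r2) y.
Proof. apply ex_cont. unfold Gd. auto_derive. auto. Qed.
Lemma cGdneg E F r1 r2 y : continuity_pt (fun t => - Gd E F r1 r2 (- t)) y.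
Proof. apply ex_cont. unfold Gd. auto_derive. auto. Qed.

Lemma lim_from_cont (u : R -> R) c : continuity_pt u c -> u c = 0 ->
  filterlim u (at_right c) (locally 0) /\ filterlim u (at_left c) (locally 0).
Proof.
  intros Hc H0. rewrite <- H0. apply cont_conv in Hc.
  split; (eapply filterlim_filter_le_1; [apply filter_le_within | exact Hc]).
Qed.

Lemma sgn_pos x : 0 < x -> sgn x = 1.
Proof. intros H. unfold sgn. destruct (Rlt_dec 0 x); [auto| lra]. Qed.
Lemma sgn_neg x : x < 0 -> sgn x = -1.
Proof. intros H. unfold sgn. destruct (Rlt_dec 0 x); [lra|]. destruct (Rlt_dec x 0); [auto|lra]. Qed.

Lemma existence m tau : 0 < m -> 36 <= tau * m / 4 ->
  exists lam, principal_eigenvalue m tau lam.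
Proof.
  intros Hm Hb0. set (b := tau * m / 4) in *.
  assert (Htau : tau = 4 * b / m) by (unfold b; field; lra).
  set (f := fun a => b * (exp a - exp (- a)) - a * (exp a + exp (- a))).
  set (a1 := (b - 1) / 2).
  assert (Hfb : f b < 0).
  { unfold f. pose proof (exp_pos (- b)). nra. }
  assert (Hfa1 : 0 < f a1).
  { unfold f. set (E := exp a1). set (F := exp (- a1)).
    assert (E * F = 1) by (unfold E, F; rewrite <- exp_plus, Rplus_opp_r; apply exp_0).
    assert (1 + 2 * a1 <= E * E) by (unfold E; rewrite <- exp_plus; replace (a1 + a1) with (2 * a1) by ring; apply exp_ge1x).
    assert (0 < E) by apply exp_pos.
    assert (E * (b * (E - F) - a1 * (E + F)) = (b - a1) * (E * E) - (b + a1)) by nra.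
    assert (0 < (b - a1) * (E * E) - (b + a1)) by (unfold a1 in *; nra).
    nra. }
  assert (Hcf : continuity f).
  { intro x. apply ex_cont. unfold f. auto_derive. auto. }
  destruct (IVT_gen f a1 b 0 Hcf) as [a [Ha Hfa]].
  { rewrite Rmin_right, Rmax_left by lra. lra. }
  rewrite Rmin_left, Rmax_right in Ha by (unfold a1; lra).
  assert (Ha0 : 0 < a) by (unfold a1 in Ha; lra).
  set (s := 2 * a / m). set (E := exp a). set (F := exp (- a)).
  set (r1 := tau / 2 - s). set (r2 := tau / 2 + s).
  set (lam := tau ^ 2 / 4 - s ^ 2).
  assert (Hrel : b * (E - F) - a * (E + F) = 0) by exact Hfa.
  assert (Gd0 : Gd E F r1 r2 0 = 0).
  { unfold Gd. rewrite !Rmult_0_r, exp_0.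
    replace (E * r1 * 1 - F * r2 * 1) with (2 / m * (b * (E - F) - a * (E + F)))
      by (unfold r1, r2, s; rewrite Htau; field; lra).
    rewrite Hrel; ring. }
  assert (ODE : forall y, - Gdd E F r1 r2 y + tau * Gd E F r1 r2 y = lam * Gf E F r1 r2 y).
  { intro y. unfold Gdd, Gd, Gf, lam, r1, r2. field. }
  assert (Gpos : forall y, 0 <= y < m / 2 -> 0 < Gf E F r1 r2 y).
  { intros y Hy. unfold Gf, E, F. rewrite <- !exp_plus.
    assert (s * y < a).
    { unfold s. replace (2 * a / m * y) with (a * (2 * y / m)) by (field; lra).
      assert (2 * y / m < 1) by (apply Rmult_lt_reg_r with m; auto; unfold Rdiv;
        rewrite Rmult_assoc, Rinv_l; lra).
      nra. }
    assert (r2 * y - r1 * y = 2 * (s * y)) by (unfold r1, r2; field).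
    assert (Hlt : - a + r2 * y < a + r1 * y) by lra.
    pose proof (exp_increasing _ _ Hlt). lra. }
  assert (Gend : Gf E F r1 r2 (m / 2) = 0).
  { unfold Gf, E, F. rewrite <- !exp_plus. replace (- a + r2 * (m / 2)) with (a + r1 * (m / 2)).
    ring. unfold r1, r2, s. field. lra. }
  exists lam.
  exists (fun x => Gf E F r1 r2 (Rabs x)).
  exists (fun x => if Rle_dec 0 x then Gd E F r1 r2 x else - Gd E F r1 r2 (- x)).
  split; [|split; [|split; [|split]]].
  - intros x Hx. destruct (Rtotal_order x 0) as [Hx0|[Hx0|Hx0]].
    + destruct (Rle_dec 0 x) as [|_]; [lra|]. split.
      * apply is_derive_ext_loc with (f := fun t => Gf E F r1 r2 (- t)).
        -- apply filter_imp with (2 := loc_lt x 0 Hx0). intros t Ht. rewrite Rabs_left; auto.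
        -- apply drv_neg. apply dGf.
      * apply cont_conv. apply continuity_pt_ext_loc with (f := fun t => - Gd E F r1 r2 (- t)).
        -- apply filter_imp with (2 := loc_lt x 0 Hx0). intros t Ht.
           destruct (Rle_dec 0 t); [lra|auto].
        -- apply cGdneg.
    + subst x. destruct (Rle_dec 0 0) as [_|]; [|lra]. rewrite Gd0. split.
      * apply glue_der with (g := Gf E F r1 r2) (h := fun t => Gf E F r1 r2 (- t)).
        -- intros y Hy. rewrite Rabs_pos_eq; auto.
        -- intros y Hy. rewrite Rabs_left1; auto.
        -- pose proof (dGf E F r1 r2 0) as D. rewrite Gd0 in D. exact D.
        -- pose proof (drv_neg _ 0 _ (dGf E F r1 r2 (-0))) as D.
           rewrite Ropp_0, Gd0, Ropp_0 in D. exact D.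
      * apply cont_conv.
        apply glue_cont with (g := Gd E F r1 r2) (h := fun t => - Gd E F r1 r2 (- t)).
        -- intros y Hy. destruct (Rle_dec 0 y); [auto|lra].
        -- intros y Hy. destruct (Rle_dec 0 y); [|auto].
           assert (y = 0) by lra. subst y. rewrite Ropp_0, Gd0. ring.
        -- apply cGd.
        -- apply cGdneg.
    + destruct (Rle_dec 0 x) as [_|]; [|lra]. split.
      * apply is_derive_ext_loc with (f := Gf E F r1 r2).
        -- apply filter_imp with (2 := loc_gt x 0 Hx0). intros t Ht. rewrite Rabs_pos_eq; lra.
        -- apply dGf.
      * apply cont_conv. apply continuity_pt_ext_loc with (f := Gd E F r1 r2).
        -- apply filter_imp with (2 := loc_gt x 0 Hx0). intros t Ht.
           destruct (Rle_dec 0 t); [auto|lra].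
        -- apply cGd.
  - intros x Hx Hx0. destruct (Rtotal_order x 0) as [Hn|[Hn|Hn]]; [| lra |].
    + exists (Gdd E F r1 r2 (- x)). split.
      * apply is_derive_ext_loc with (f := fun t => - Gd E F r1 r2 (- t)).
        -- apply filter_imp with (2 := loc_lt x 0 Hn). intros t Ht.
           destruct (Rle_dec 0 t); [lra|auto].
        -- apply dGdneg.
      * rewrite sgn_neg by auto. destruct (Rle_dec 0 x); [lra|].
        rewrite Rabs_left by auto. rewrite <- ODE. ring.
    + exists (Gdd E F r1 r2 x). split.
      * apply is_derive_ext_loc with (f := Gd E F r1 r2).
        -- apply filter_imp with (2 := loc_gt x 0 Hn). intros t Ht.
           destruct (Rle_dec 0 t); [auto|lra].
        -- apply dGd.
      * rewrite sgn_pos by auto. destruct (Rle_dec 0 x); [|lra].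
        rewrite Rabs_pos_eq by lra. rewrite <- ODE. ring.
  - intros x Hx. apply Gpos. split; [apply Rabs_pos|]. apply Rabs_def1; lra.
  - apply lim_from_cont.
    + change (continuity_pt (comp (Gf E F r1 r2) Rabs) (- (m / 2))).
      apply continuity_pt_comp; [apply Rcontinuity_abs | apply cGf].
    + rewrite Rabs_left by lra. rewrite Ropp_involutive. auto.
  - apply lim_from_cont.
    + change (continuity_pt (comp (Gf E F r1 r2) Rabs) (m / 2)).
      apply continuity_pt_comp; [apply Rcontinuity_abs | apply cGf].
    + rewrite Rabs_pos_eq by lra. auto.
Qed.

Lemma cmul (f g : R -> R) (x : R) : continuity_pt f x -> continuity_pt g x ->
  continuity_pt (fun t => f t * g t) x.
Proof. intros. apply (continuity_pt_mult f g x); auto. Qed.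
Lemma cplus (f g : R -> R) (x : R) : continuity_pt f x -> continuity_pt g x ->
  continuity_pt (fun t => f t + g t) x.
Proof. intros. apply (continuity_pt_plus f g x); auto. Qed.
Lemma cminus (f g : R -> R) (x : R) : continuity_pt f x -> continuity_pt g x ->
  continuity_pt (fun t => f t - g t) x.
Proof. intros. apply (continuity_pt_minus f g x); auto. Qed.
Lemma cconst (c x : R) : continuity_pt (fun _ => c) x.
Proof. apply ex_cont. auto_derive. auto. Qed.
Lemma cid (x : R) : continuity_pt (fun t => t) x.
Proof. apply ex_cont. auto_derive. auto. Qed.
Lemma cexp (c x : R) : continuity_pt (fun t => exp (c * t)) x.
Proof. apply ex_cont. auto_derive. auto. Qed.

Lemma drv_eq (f : R -> R) (x l1 l2 : R) : is_derive f x l1 -> l1 = l2 -> is_derive f x l2.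
Proof. intros H <-; exact H. Qed.

Lemma vderiv1 (u u' : R -> R) (sig tau z : R) : is_derive u z (u' z) ->
  is_derive (fun t => exp (- (sig * tau / 2) * t) * u t) z
    (exp (- (sig * tau / 2) * z) * (u' z - sig * tau / 2 * u z)).
Proof.
  intros Hu. eapply drv_eq; [apply drv_mult; [apply drv_exp | exact Hu] | cbv beta; ring].
Qed.

Lemma vderiv2 (u u' : R -> R) (sig tau lam z d2 : R) : sig * sig = 1 ->
  is_derive u z (u' z) -> is_derive u' z d2 -> - d2 + tau * sig * u' z = lam * u z ->
  is_derive (fun t => exp (- (sig * tau / 2) * t) * (u' t - sig * tau / 2 * u t)) z
    ((tau ^ 2 / 4 - lam) * (exp (- (sig * tau / 2) * z) * u z)).
Proof.
  intros Hs Hu Hu' Heq. eapply drv_eq.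
  - apply drv_mult; [apply drv_exp |].
    apply (is_derive_minus u' (fun t => sig * tau / 2 * u t) z d2 (sig * tau / 2 * u' z)); auto.
    eapply drv_eq; [apply (is_derive_scal u z (sig * tau / 2) (u' z)); auto | reflexivity].
  - assert (d2 = tau * sig * u' z - lam * u z) by lra. subst d2.
    unfold minus, plus, opp; simpl.
    replace (tau * (tau * 1)) with (sig * sig * (tau * tau)) by (rewrite Hs; ring). field.
Qed.

Lemma pq_deriv (V V1 : R -> R) (k s z : R) : is_derive V z (V1 z) -> is_derive V1 z (k * V z) ->
  s * s = k -> is_derive (fun t => (V1 t + s * V t) * exp (- s * t)) z 0.
Proof.
  intros HV HV1 Hs. eapply drv_eq.
  - apply drv_mult; [| apply drv_exp].
    apply (is_derive_plus V1 (fun t => s * V t) z (k * V z) (s * V1 z)); auto.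
    eapply drv_eq; [apply (is_derive_scal V z s (V1 z)); auto | reflexivity].
  - unfold plus; simpl. rewrite <- Hs. ring.
Qed.

Lemma tangent_right (V V1 : R -> R) (c d k : R) :
  (forall z, c < z < d -> is_derive V z (V1 z) /\ is_derive V1 z (k * V z)) -> k <= 0 ->
  (forall z, c < z < d -> 0 < V z) -> forall x, c < x < d -> 0 <= V x + V1 x * (d - x).
Proof.
  intros HD Hk Hp x Hx.
  assert (Hdec : forall y, x <= y < d -> V1 y <= V1 x).
  { intros y Hy. apply (L_decr V1 (fun z => k * V z)); try lra. intros z Hz.
    split; [apply HD; lra|]. assert (0 < V z) by (apply Hp; lra). nra. }
  assert (Htan : forall y, x <= y < d -> V y <= V x + V1 x * (y - x)).
  { intros y Hy. assert (V y - V1 x * y <= V x - V1 x * x); [|lra].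
    apply (L_decr (fun t => V t - V1 x * t) (fun t => V1 t - V1 x)); try lra.
    intros z Hz. split.
    - eapply drv_eq.
      + apply (is_derive_minus V (fun t => V1 x * t) z (V1 z) (V1 x)).
        * apply HD; lra.
        * auto_derive; auto; ring.
      + unfold minus, plus, opp; simpl; ring.
    - pose proof (Hdec z ltac:(lra)). lra. }
  pose proof (Hp x Hx) as Hvx.
  destruct (Rle_or_lt 0 (V1 x)) as [H0|H0].
  - nra.
  - assert (Hq : V1 x * (V x / (- V1 x)) = - V x) by (field; lra).
    assert (Hq2 : 0 < V x / (- V1 x)) by (apply Rdiv_lt_0_compat; lra).
    assert (Hq3 : V x = (V x / (- V1 x)) * (- V1 x)) by (field; lra).
    remember (V x / (- V1 x)) as q eqn:Hqdef. clear Hqdef.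
    destruct (Rlt_or_le (x + q) d) as [Hy|Hy].
    + exfalso. assert (Hy' : x <= x + q < d) by (split; lra).
      pose proof (Htan (x + q) Hy') as Ht. pose proof (Hp (x + q) ltac:(lra)).
      replace (x + q - x) with q in Ht by ring. lra.
    + nra.
Qed.

Lemma const_right (p : R -> R) c d : c < d -> continuity_pt p c ->
  (forall z, c < z < d -> is_derive p z 0) -> forall x, c < x < d -> p x = p c.
Proof.
  intros Hcd Hc HD x Hx.
  assert (Heq : forall y, c < y <= x -> p y = p x).
  { intros y Hy. symmetry. apply L_const; try lra. intros z Hz. apply HD; lra. }
  assert (H1 : 0 <= p c - p x).
  { apply (cont_right_ge0 (fun t => p t - p x) c (x - c)); try lra.
    - apply cminus; [auto | apply cconst].
    - intros y Hy. rewrite (Heq y) by lra. lra. }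
  assert (H2 : 0 <= p x - p c).
  { apply (cont_right_ge0 (fun t => p x - p t) c (x - c)); try lra.
    - apply cminus; [apply cconst | auto].
    - intros y Hy. rewrite (Heq y) by lra. lra. }
  lra.
Qed.

Lemma const_left (p : R -> R) c d : d < c -> continuity_pt p c ->
  (forall z, d < z < c -> is_derive p z 0) -> forall x, d < x < c -> p x = p c.
Proof.
  intros Hcd Hc HD x Hx.
  assert (Heq : forall y, x <= y < c -> p y = p x).
  { intros y Hy. apply L_const; try lra. intros z Hz. apply HD; lra. }
  assert (H1 : 0 <= p c - p x).
  { apply (cont_left_ge0 (fun t => p t - p x) c (c - x)); try lra.
    - apply cminus; [auto | apply cconst].
    - intros y Hy. rewrite (Heq y) by lra. lra. }
  assert (H2 : 0 <= p x - p c).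
  { apply (cont_left_ge0 (fun t => p x - p t) c (c - x)); try lra.
    - apply cminus; [apply cconst | auto].
    - intros y Hy. rewrite (Heq y) by lra. lra. }
  lra.
Qed.

Lemma tangent_left (V V1 : R -> R) (c d k : R) :
  (forall z, c < z < d -> is_derive V z (V1 z) /\ is_derive V1 z (k * V z)) -> k <= 0 ->
  (forall z, c < z < d -> 0 < V z) -> forall x, c < x < d -> 0 <= V x - V1 x * (x - c).
Proof.
  intros HD Hk Hp x Hx.
  assert (H := tangent_right (fun t => V (- t)) (fun t => - V1 (- t)) (- d) (- c) k).
  assert (H' : 0 <= V (- - x) + - V1 (- - x) * (- c - - x)).
  { apply H; auto; [| intros z Hz; apply Hp; lra | lra].
    intros z Hz. destruct (HD (- z) ltac:(split; lra)) as [D1 D2]. split.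
    - apply drv_neg. exact D1.
    - eapply drv_eq. apply (is_derive_opp (fun t => V1 (- t)) z (- (k * V (- z)))).
      apply drv_neg. exact D2. unfold opp; simpl; ring. }
  rewrite Ropp_involutive in H'. lra.
Qed.

Lemma side_formula (u V1 : R -> R) (c s P Q x : R) : 0 < s ->
  (V1 x + s * (exp (c * x) * u x)) * exp (- s * x) = P ->
  (V1 x + - s * (exp (c * x) * u x)) * exp (- - s * x) = Q ->
  u x = exp (- c * x) * (P * exp (s * x) - Q * exp (- s * x)) / (2 * s).
Proof.
  intros Hs HP HQ. rewrite Ropp_involutive in HQ.
  assert (E1 : exp (s * x) * exp (- s * x) = 1) by (rewrite <- exp_plus; replace (s * x + - s * x) with 0 by ring; apply exp_0).
  assert (E2 : exp (- c * x) * exp (c * x) = 1) by (rewrite <- exp_plus; replace (- c * x + c * x) with 0 by ring; apply exp_0).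
  assert (A : P * exp (s * x) = V1 x + s * (exp (c * x) * u x)).
  { rewrite <- HP. transitivity ((V1 x + s * (exp (c * x) * u x)) * (exp (s * x) * exp (- s * x))); [ring|]. rewrite E1; ring. }
  assert (B : Q * exp (- s * x) = V1 x + - s * (exp (c * x) * u x)).
  { rewrite <- HQ. transitivity ((V1 x + - s * (exp (c * x) * u x)) * (exp (s * x) * exp (- s * x))); [ring|]. rewrite E1; ring. }
  rewrite A, B. field_simplify; [|lra].
  transitivity (u x * (exp (- c * x) * exp (c * x))); [rewrite E2; ring| field; lra].
Qed.

Lemma bnd_left (u Phi : R -> R) (c d : R) : c < d ->
  (forall x, c < x < d -> u x = Phi x) -> filterlim u (at_left d) (locally 0) ->
  continuity_pt Phi d -> Phi d = 0.
Proof.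
  intros Hcd Heq Hu Hc.
  assert (H1 : filterlim Phi (at_left d) (locally 0)).
  { apply filterlim_ext_loc with u; auto.
    unfold at_left, within. apply filter_imp with (2 := loc_gt d c Hcd).
    intros x Hx Hx'. apply Heq; split; auto. }
  assert (H2 : filterlim Phi (at_left d) (locally (Phi d))).
  { apply cont_conv in Hc. eapply filterlim_filter_le_1; [apply filter_le_within | exact Hc]. }
  symmetry. apply (@filterlim_locally_unique _ R_AbsRing R_NormedModule (at_left d) _ Phi); auto.
Qed.

Lemma bnd_right (u Phi : R -> R) (c d : R) : c < d ->
  (forall x, c < x < d -> u x = Phi x) -> filterlim u (at_right c) (locally 0) ->
  continuity_pt Phi c -> Phi c = 0.
Proof.
  intros Hcd Heq Hu Hc.
  assert (H1 : filterlim Phi (at_right c) (locally 0)).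
  { apply filterlim_ext_loc with u; auto.
    unfold at_right, within. apply filter_imp with (2 := loc_lt c d Hcd).
    intros x Hx Hx'. apply Heq; split; auto. }
  assert (H2 : filterlim Phi (at_right c) (locally (Phi c))).
  { apply cont_conv in Hc. eapply filterlim_filter_le_1; [apply filter_le_within | exact Hc]. }
  symmetry. apply (@filterlim_locally_unique _ R_AbsRing R_NormedModule (at_right c) _ Phi); auto.
Qed.

Lemma zero_extract a b c : 0 < a -> 0 < c -> a * b / c = 0 -> b = 0.
Proof. intros Ha Hc H. assert (b = (a * b / c) * c / a) by (field; lra). rewrite H in H0. lra. Qed.

Ltac contsolve := repeat (first [ simple apply cconst | simple apply cexp | simple apply cid | simple apply cmul | simple apply cminus | simple apply cplus | assumption ]).

Lemma uniq_rel m tau lam : 0 < m -> 4 < tau * m -> principal_eigenvalue m tau lam ->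
  exists s, 0 < s /\ lam = tau ^ 2 / 4 - s ^ 2 /\
    tau * (exp (s * (m / 2)) - exp (- s * (m / 2))) = 2 * s * (exp (s * (m / 2)) + exp (- s * (m / 2))).
Proof.
  intros Hm Htm [u [u' [H1 [H2 [H3 [H4 H5]]]]]].
  assert (I0 : - (m / 2) < 0 < m / 2) by (split; lra).
  destruct (H1 0 I0) as [Du0 Cu'0].
  assert (Cu0 : continuity_pt u 0) by (apply (derive_cont u 0 (u' 0)); auto).
  apply cont_conv' in Cu'0.
  assert (HU : 0 < u 0) by (apply H3; auto).
  set (k := tau ^ 2 / 4 - lam).
  set (vR := fun t => exp (- (1 * tau / 2) * t) * u t).
  set (VR := fun t => exp (- (1 * tau / 2) * t) * (u' t - 1 * tau / 2 * u t)).
  set (vL := fun t => exp (- (-1 * tau / 2) * t) * u t).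
  set (VL := fun t => exp (- (-1 * tau / 2) * t) * (u' t - -1 * tau / 2 * u t)).
  assert (DR : forall z, 0 < z < m / 2 -> is_derive vR z (VR z) /\ is_derive VR z (k * vR z)).
  { intros z Hz. destruct (H1 z ltac:(split; lra)) as [Dz _]. split.
    - apply vderiv1; auto.
    - destruct (H2 z ltac:(split; lra) ltac:(lra)) as [d2 [Dd2 Eq]].
      rewrite sgn_pos in Eq by lra.
      exact (vderiv2 u u' 1 tau lam z d2 ltac:(ring) Dz Dd2 Eq). }
  assert (DL : forall z, - (m / 2) < z < 0 -> is_derive vL z (VL z) /\ is_derive VL z (k * vL z)).
  { intros z Hz. destruct (H1 z ltac:(split; lra)) as [Dz _]. split.
    - apply vderiv1; auto.
    - destruct (H2 z ltac:(split; lra) ltac:(lra)) as [d2 [Dd2 Eq]].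
      rewrite sgn_neg in Eq by lra.
      exact (vderiv2 u u' (-1) tau lam z d2 ltac:(ring) Dz Dd2 Eq). }
  assert (PR : forall z, 0 < z < m / 2 -> 0 < vR z).
  { intros z Hz. unfold vR. pose proof (exp_pos (- (1 * tau / 2) * z)). pose proof (H3 z ltac:(split; lra)). nra. }
  assert (PL : forall z, - (m / 2) < z < 0 -> 0 < vL z).
  { intros z Hz. unfold vL. pose proof (exp_pos (- (-1 * tau / 2) * z)). pose proof (H3 z ltac:(split; lra)). nra. }
  assert (Hk : 0 < k).
  { destruct (Rlt_or_le 0 k) as [|Hk]; auto. exfalso.
    assert (TR := tangent_right vR VR 0 (m / 2) k DR Hk PR).
    assert (TL := tangent_left vL VL (- (m / 2)) 0 k DL Hk PL).
    set (Rr := fun t => u t + (u' t - 1 * tau / 2 * u t) * (m / 2 - t)).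
    set (Ll := fun t => u t - (u' t - -1 * tau / 2 * u t) * (t - - (m / 2))).
    assert (R0 : 0 <= Rr 0).
    { apply (cont_right_ge0 Rr 0 (m / 2)); [unfold Rr; contsolve | lra |].
      intros x Hx. pose proof (TR x ltac:(split; lra)) as T. unfold vR, VR in T.
      pose proof (exp_pos (- (1 * tau / 2) * x)) as He.
      cbv beta in T.
      assert (exp (- (1 * tau / 2) * x) * Rr x = exp (- (1 * tau / 2) * x) * u x + exp (- (1 * tau / 2) * x) * (u' x - 1 * tau / 2 * u x) * (m / 2 - x)) by (unfold Rr; ring).
      nra. }
    assert (L0 : 0 <= Ll 0).
    { apply (cont_left_ge0 Ll 0 (m / 2)); [unfold Ll; contsolve | lra |].
      intros x Hx. pose proof (TL x ltac:(split; lra)) as T. unfold vL, VL in T.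
      pose proof (exp_pos (- (-1 * tau / 2) * x)) as He.
      cbv beta in T.
      assert (exp (- (-1 * tau / 2) * x) * Ll x = exp (- (-1 * tau / 2) * x) * u x - exp (- (-1 * tau / 2) * x) * (u' x - -1 * tau / 2 * u x) * (x - - (m / 2))) by (unfold Ll; ring).
      nra. }
    unfold Rr, Ll in R0, L0. nra. }
  set (s := sqrt k).
  assert (Hs : 0 < s) by (apply sqrt_lt_R0; auto).
  assert (Hss : s * s = k) by (apply sqrt_sqrt; lra).
  assert (Hss' : (- s) * (- s) = k) by (rewrite <- Hss; ring).
  set (pR := fun t => (VR t + s * vR t) * exp (- s * t)).
  set (qR := fun t => (VR t + - s * vR t) * exp (- - s * t)).
  set (pL := fun t => (VL t + s * vL t) * exp (- s * t)).
  set (qL := fun t => (VL t + - s * vL t) * exp (- - s * t)).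
  assert (CpR : continuity_pt pR 0) by (unfold pR, VR, vR; contsolve).
  assert (CqR : continuity_pt qR 0) by (unfold qR, VR, vR; contsolve).
  assert (CpL : continuity_pt pL 0) by (unfold pL, VL, vL; contsolve).
  assert (CqL : continuity_pt qL 0) by (unfold qL, VL, vL; contsolve).
  assert (EpR : forall x, 0 < x < m / 2 -> pR x = pR 0).
  { apply const_right; [lra | auto |]. intros z Hz. destruct (DR z Hz) as [D1 D2].
    exact (pq_deriv vR VR k s z D1 D2 Hss). }
  assert (EqR : forall x, 0 < x < m / 2 -> qR x = qR 0).
  { apply const_right; [lra | auto |]. intros z Hz. destruct (DR z Hz) as [D1 D2].
    exact (pq_deriv vR VR k (- s) z D1 D2 Hss'). }
  assert (EpL : forall x, - (m / 2) < x < 0 -> pL x = pL 0).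
  { apply const_left; [lra | auto |]. intros z Hz. destruct (DL z Hz) as [D1 D2].
    exact (pq_deriv vL VL k s z D1 D2 Hss). }
  assert (EqL : forall x, - (m / 2) < x < 0 -> qL x = qL 0).
  { apply const_left; [lra | auto |]. intros z Hz. destruct (DL z Hz) as [D1 D2].
    exact (pq_deriv vL VL k (- s) z D1 D2 Hss'). }
  set (PhiR := fun x => exp (- - (1 * tau / 2) * x) * (pR 0 * exp (s * x) - qR 0 * exp (- s * x)) / (2 * s)).
  set (PhiL := fun x => exp (- - (-1 * tau / 2) * x) * (pL 0 * exp (s * x) - qL 0 * exp (- s * x)) / (2 * s)).
  assert (BR : PhiR (m / 2) = 0).
  { apply (bnd_left u PhiR 0 (m / 2)); [lra | | auto |].
    - intros x Hx. unfold PhiR. apply (side_formula u VR); auto.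
      + exact (EpR x Hx).
      + exact (EqR x Hx).
    - apply ex_cont. unfold PhiR. auto_derive. lra. }
  assert (BL : PhiL (- (m / 2)) = 0).
  { apply (bnd_right u PhiL (- (m / 2)) 0); [lra | | auto |].
    - intros x Hx. unfold PhiL. apply (side_formula u VL); auto.
      + exact (EpL x Hx).
      + exact (EqL x Hx).
    - apply ex_cont. unfold PhiL. auto_derive. lra. }
  unfold PhiR, PhiL in BR, BL.
  apply zero_extract in BR; [| apply exp_pos | lra].
  apply zero_extract in BL; [| apply exp_pos | lra].
  assert (HpR : pR 0 = u' 0 - tau / 2 * u 0 + s * u 0) by (unfold pR, VR, vR; rewrite !Rmult_0_r, exp_0; field).
  assert (HqR : qR 0 = u' 0 - tau / 2 * u 0 - s * u 0) by (unfold qR, VR, vR; rewrite !Rmult_0_r, exp_0; field).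
  assert (HpL : pL 0 = u' 0 + tau / 2 * u 0 + s * u 0) by (unfold pL, VL, vL; rewrite !Rmult_0_r, exp_0; field).
  assert (HqL : qL 0 = u' 0 + tau / 2 * u 0 - s * u 0) by (unfold qL, VL, vL; rewrite !Rmult_0_r, exp_0; field).
  rewrite HpR, HqR in BR. rewrite HpL, HqL in BL.
  replace (s * - (m / 2)) with (- s * (m / 2)) in BL by ring.
  replace (- s * - (m / 2)) with (s * (m / 2)) in BL by ring.
  exists s. split; [auto | split].
  - unfold k in Hss. replace (s ^ 2) with (s * s) by ring. lra.
  - set (E := exp (s * (m / 2))) in *. set (F := exp (- s * (m / 2))) in *.
    assert (u 0 * (tau * (E - F) - 2 * s * (E + F)) = 0) by nra.
    apply Rmult_integral in H. destruct H; [lra | lra].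
Qed.

Theorem mainTheorem11 :
  forall m : R, 0 < m ->
  exists C tau0 : R, 0 <= C /\ 0 <= tau0 /\
    forall tau : R, tau0 <= tau -> 0 < tau ->
      (exists lam, principal_eigenvalue m tau lam) /\
      (forall lam, principal_eigenvalue m tau lam ->
         Rabs (/ (tau ^ 2) * exp (tau * m / 2) * lam - 1)
           <= C * tau * exp (- (tau * m / 2))).
Proof.
  intros m Hm. exists (27 * m + 18), (144 / m + 1).
  assert (H144 : 0 < 144 / m) by (apply Rdiv_lt_0_compat; lra).
  split; [lra | split; [lra |]].
  intros tau Ht Htp.
  assert (Hm144 : 144 / m * m = 144) by (field; lra).
  assert (Hb : 36 <= tau * m / 4) by nra.
  split; [apply existence; auto |].
  intros lam Hlam.
  destruct (uniq_rel m tau lam Hm ltac:(nra) Hlam) as [s [Hs [Hl Hrel]]].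
  set (E := exp (s * (m / 2))) in *. set (F := exp (- s * (m / 2))) in *.
  assert (HF : F = exp (- (s * (m / 2)))) by (unfold F; f_equal; ring).
  assert (HEF : E * F = 1) by (rewrite HF; unfold E; rewrite <- exp_plus, Rplus_opp_r; apply exp_0).
  assert (HEp : 0 < E) by apply exp_pos. assert (HFp : 0 < F) by (unfold F; apply exp_pos).
  pose proof (final_ab (s * (m / 2)) (tau * m / 4) E F Hb ltac:(nra) eq_refl HF) as Hfin.
  assert (Hrel' : tau * m / 4 * (E - F) = s * (m / 2) * (E + F)).
  { transitivity (m / 4 * (tau * (E - F))); [field|]. rewrite Hrel. field. }
  specialize (Hfin Hrel').
  replace (2 * (tau * m / 4)) with (tau * m / 2) in Hfin by field.
  assert (HEFp : 0 < E + F) by lra.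
  assert (Heq : / (tau ^ 2) * exp (tau * m / 2) * lam = exp (tau * m / 2) / (E + F) ^ 2).
  { assert (Hlam2 : lam * (E + F) ^ 2 = tau ^ 2).
    { rewrite Hl. assert (2 * s * (E + F) = tau * (E - F)) by lra.
      transitivity (tau ^ 2 / 4 * (E + F) ^ 2 - (2 * s * (E + F)) ^ 2 / 4); [field|].
      rewrite H. transitivity (tau ^ 2 * (E * F)); [field | rewrite HEF; ring]. }
    assert (lam = tau ^ 2 / (E + F) ^ 2) by (rewrite <- Hlam2; field; lra).
    rewrite H. field. split; lra. }
  rewrite Heq. eapply Rle_trans; [exact Hfin|].
  pose proof (exp_pos (- (tau * m / 2))).
  assert (108 * (tau * m / 4) + 18 <= (27 * m + 18) * tau) by nra.
  nra.
Qed.
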